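(* Let $(\mathfrak g,\mathfrak k,\theta)$ be a reductive symmetric superpair and $x\in\mathfrak p_0$. Then \[\dim\mathfrak z_{\mathfrak k_1}(x)-\dim\mathfrak z_{\mathfrak p_1}(x)=\dim\mathfrak k_1-\dim\mathfrak p_1,\] where $\mathfrak z_{V}(x)=\{y\in V:[x,y]=0\}$.
   Context: A symmetric superpair $(\mathfrak g,\mathfrak k,\theta)$: finite-dimensional complex Lie superalgebra $\mathfrak g$, even involutive automorphism $\theta$, $\mathfrak k,\mathfrak p$ the $(+1),(-1)$-eigenspaces, $\mathfrak k_j=\mathfrak k\cap\mathfrak g_j$, $\mathfrak p_j=\mathfrak p\cap\mathfrak g_j$. Reductive: $\mathfrak g$ semisimple as $\mathfrak g_0$-module, $\mathfrak z(\mathfrak g)\subset\mathfrak g_0$, and there is a non-degenerate even supersymmetric $\mathfrak g$- and $\theta$-invariant bilinear form $b$ on $\mathfrak g$. *)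

(* Defs.v *)
(* Parities are booleans (false = even). *)
From HB Require Import structures.
From mathcomp Require Import all_boot all_order all_algebra.
Set Implicit Arguments. Unset Strict Implicit. Unset Printing Implicit Defensive.
Import GRing.Theory.
Local Open Scope ring_scope.

Section Super.
Variables (F : fieldType) (V : vectType F).

Definition gpart (g0 g1 : {vspace V}) (i : bool) : {vspace V} :=
  if i then g1 else g0.

Definition ssign (i j : bool) : F := (-1) ^+ (i && j).

Definition bilinear_br (br : V -> V -> V) : Prop :=
  (forall (a : F) x y z, br (a *: x + y) z = a *: br x z + br y z) /\
  (forall (a : F) x y z, br z (a *: x + y) = a *: br z x + br z y).

Definition bilinear_form (b : V -> V -> F) : Prop :=
  (forall (a : F) x y z, b (a *: x + y) z = a * b x z + b y z) /\
  (forall (a : F) x y z, b z (a *: x + y) = a * b z x + b z y).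

Definition is_lie_superalgebra (g0 g1 : {vspace V}) (br : V -> V -> V) : Prop :=
  [/\ ((g0 + g1)%VS = fullv /\ directv (g0 + g1)),
      bilinear_br br,
      (forall i j x y, x \in gpart g0 g1 i -> y \in gpart g0 g1 j ->
         br x y \in gpart g0 g1 (i (+) j)),
      (forall i j x y, x \in gpart g0 g1 i -> y \in gpart g0 g1 j ->
         br x y = - (ssign i j *: br y x)) &
      (forall i j x y z, x \in gpart g0 g1 i -> y \in gpart g0 g1 j ->
         br x (br y z) = br (br x y) z + ssign i j *: br y (br x z))].

Definition is_even_involution (g0 g1 : {vspace V}) (br : V -> V -> V)
    (theta : 'End(V)) : Prop :=
  [/\ (theta \o theta)%VF = \1%VF,
      (forall x y, theta (br x y) = br (theta x) (theta y)),
      (theta @: g0 <= g0)%VS & (theta @: g1 <= g1)%VS].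

Definition kspace (theta : 'End(V)) : {vspace V} := lker (theta - \1%VF).
Definition pspace (theta : 'End(V)) : {vspace V} := lker (theta + \1%VF).

Definition g0_stable (g0 : {vspace V}) (br : V -> V -> V) (W : {vspace V}) : Prop :=
  forall x w, x \in g0 -> w \in W -> br x w \in W.

Definition g0_semisimple (g0 : {vspace V}) (br : V -> V -> V) : Prop :=
  forall W : {vspace V}, g0_stable g0 br W ->
    exists W' : {vspace V},
      [/\ g0_stable g0 br W', (W + W')%VS = fullv & (W :&: W')%VS = 0%VS].

Definition reductive_symmetric_superpair (g0 g1 : {vspace V})
    (br : V -> V -> V) (theta : 'End(V)) : Prop :=
  [/\ is_lie_superalgebra g0 g1 br,
      is_even_involution g0 g1 br theta,
      g0_semisimple g0 br,
      (forall x, (forall y, br x y = 0) -> x \in g0) &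
      exists b : V -> V -> F,
        [/\ bilinear_form b /\
            (forall x y, x \in g0 -> y \in g1 -> b x y = 0 /\ b y x = 0),
            (forall i j x y, x \in gpart g0 g1 i -> y \in gpart g0 g1 j ->
               b x y = ssign i j * b y x),
            (forall x y z, b (br x y) z = b x (br y z)),
            (forall x y, b (theta x) (theta y) = b x y) &
            (forall x, (forall y, b x y = 0) -> x = 0)]].

Definition centralizer_in (br : V -> V -> V) (U : {vspace V}) (x : V) : {vspace V} :=
  (U :&: lker (linfun (br x)))%VS.

End Super.

(* Main.v *)
Require Import Defs.
From HB Require Import structures.
From mathcomp Require Import all_boot all_order all_algebra.
Import GRing.Theory.
Set Implicit Arguments.
Local Open Scope ring_scope.

Lemma linfunE' (R : fieldType) (aT rT : vectType R) (f : aT -> rT)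
  (lf : linear f) v : linfun f v = f v.
Proof.
pose g : {linear aT -> rT} := HB.pack f (GRing.isLinear.Build R aT rT *:%R f lf).
exact: (lfunE g v).
Qed.

Section Key.
Variables (R : fieldType) (V : vectType R).

Lemma bf0l (b : V -> V -> R) : bilinear_form b -> forall z, b 0 z = 0.
Proof.
move=> [H1 _] z; have := H1 1 0 0 z; rewrite scaler0 addr0 mul1r.
by move/(congr1 (fun t => t - b 0 z)); rewrite addrK subrr => /esym.
Qed.

Lemma bf0r (b : V -> V -> R) : bilinear_form b -> forall z, b z 0 = 0.
Proof.
move=> [_ H1] z; have := H1 1 0 0 z; rewrite scaler0 addr0 mul1r.
by move/(congr1 (fun t => t - b z 0)); rewrite addrK subrr => /esym.
Qed.

Lemma key_le (ad : 'End(V)) (b : V -> V -> R) (K P : {vspace V}) :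
  bilinear_form b ->
  (forall y z, y \in K -> z \in P -> b (ad y) z = - b y (ad z)) ->
  (ad @: K <= P)%VS ->
  (forall w, w \in P -> (forall z, z \in P -> b w z = 0) -> w = 0) ->
  (\dim (ad @: K) <= \dim (ad @: P))%N.
Proof.
move=> bfb Hadj HKP Hnd.
set W := (ad @: P)%VS.
pose T (y : V) : 'Hom(subvs_of W, R^o) := linfun (fun u : subvs_of W => (b y (vsval u) : R^o)).
have linu y : linear (fun u : subvs_of W => (b y (vsval u) : R^o)).
  by move=> a u v /=; rewrite (proj2 bfb).
have TE y u : T y u = b y (vsval u) by rewrite linfunE'.
have linT : linear T.
  move=> a y y'; apply/lfunP => u.
  by rewrite add_lfunE scale_lfunE !TE (proj1 bfb).
pose TL := linfun T.
have ker_eq : (K :&: lker TL)%VS = (K :&: lker ad)%VS.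
  apply/vspaceP => y; rewrite !memv_cap; case yK: (y \in K) => //=.
  rewrite !memv_ker linfunE' //; apply/eqP/eqP => H.
  - apply: Hnd; first by apply: (subvP HKP); exact: memv_img.
    move=> z zP; rewrite Hadj // .
    have := congr1 (fun f : 'Hom(subvs_of W, R^o) => f (vsproj W (ad z))) H.
    rewrite TE zero_lfunE vsprojK ?memv_img // => ->; exact: oppr0.
  - apply/lfunP => u; rewrite TE zero_lfunE.
    have /memv_imgP [z zP ->] := subvsP u.
    by rewrite -[b y _]opprK -Hadj // H bf0l // oppr0.
have := limg_ker_dim TL K; have := limg_ker_dim ad K.
rewrite ker_eq => <- /eqP; rewrite eqn_add2l => /eqP <-.
apply: leq_trans (dimvS (subvf _)) _.
rewrite dimvf; have -> : dim 'Hom(subvs_of W, R^o) = (\dim W * 1)%N by []. by rewrite muln1.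
Qed.

Lemma bfNl (b : V -> V -> R) : bilinear_form b -> forall y z, b (- y) z = - b y z.
Proof.
move=> bfb y z; have := (proj1 bfb) (-1) y 0 z.
by rewrite addr0 bf0l // addr0 scaleN1r mulN1r.
Qed.

Lemma bfNr (b : V -> V -> R) : bilinear_form b -> forall y z, b z (- y) = - b z y.
Proof.
move=> bfb y z; have := (proj2 bfb) (-1) y 0 z.
by rewrite addr0 bf0r // addr0 scaleN1r mulN1r.
Qed.

Lemma bfDr (b : V -> V -> R) : bilinear_form b -> forall y y' z, b z (y + y') = b z y + b z y'.
Proof.
move=> bfb y y' z; have := (proj2 bfb) 1 y y' z.
by rewrite scale1r mul1r.
Qed.

Lemma br0l (br : V -> V -> V) : bilinear_br br -> forall z, br 0 z = 0.
Proof.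
move=> [H1 _] z; have := H1 1 0 0 z; rewrite scaler0 addr0 scale1r.
by move/(congr1 (fun t => t - br 0 z)); rewrite addrK subrr => /esym.
Qed.

Lemma br0r (br : V -> V -> V) : bilinear_br br -> forall z, br z 0 = 0.
Proof.
move=> [_ H1] z; have := H1 1 0 0 z; rewrite scaler0 addr0 scale1r.
by move/(congr1 (fun t => t - br z 0)); rewrite addrK subrr => /esym.
Qed.

Lemma brNl (br : V -> V -> V) : bilinear_br br -> forall y z, br (- y) z = - br y z.
Proof.
move=> bfb y z; have := (proj1 bfb) (-1) y 0 z.
by rewrite addr0 br0l // addr0 !scaleN1r.
Qed.

Lemma brNr (br : V -> V -> V) : bilinear_br br -> forall y z, br z (- y) = - br z y.
Proof.
move=> bfb y z; have := (proj2 bfb) (-1) y 0 z.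
by rewrite addr0 br0r // addr0 !scaleN1r.
Qed.

End Key.

Lemma selfneg (F : fieldType) (t : F) : (2%:R : F) != 0 -> t = - t -> t = 0.
Proof.
move=> two0 /(congr1 (fun s => s + t)); rewrite addNr -mulr2n -mulr_natr => /eqP.
by rewrite mulf_eq0 (negbTE two0) orbF => /eqP.
Qed.

Theorem mainTheorem5 (F : closedFieldType) (charF0 : [pchar F] =i pred0)
    (V : vectType F) (g0 g1 : {vspace V}) (br : V -> V -> V) (theta : 'End(V))
    (Hred : reductive_symmetric_superpair g0 g1 br theta)
    (x : V) (hx : x \in (pspace theta :&: g0)%VS) :
  (\dim (centralizer_in br (kspace theta :&: g1)%VS x))%:Z
    - (\dim (centralizer_in br (pspace theta :&: g1)%VS x))%:Z
  = (\dim (kspace theta :&: g1)%VS)%:Z - (\dim (pspace theta :&: g1)%VS)%:Z.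
Proof.
case: Hred => [[[Hfull Hdir] brb Hgr Hskew Hjac] [Hinv Hhom Hth0 Hth1] _ _
  [b [[bfb bg01] bsym binv bth bnd]]].
have two0 : (2%:R : F) != 0 by move/pcharf0P: charF0 => ->.
move: hx; rewrite memv_cap => /andP [xp xg0].
have thx : theta x = - x.
  by move: xp; rewrite memv_ker add_lfunE id_lfunE addr_eq0 => /eqP.
have thK u : u \in kspace theta -> theta u = u.
  by rewrite memv_ker add_lfunE opp_lfunE id_lfunE subr_eq0 => /eqP.
have thP u : u \in pspace theta -> theta u = - u.
  by rewrite memv_ker add_lfunE id_lfunE addr_eq0 => /eqP.
have ththt u : theta (theta u) = u.
  by have := congr1 (fun f : 'End(V) => f u) Hinv; rewrite comp_lfunE id_lfunE.
have orth k p : k \in kspace theta -> p \in pspace theta -> b k p = 0 /\ b p k = 0.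
  move=> kK pP; split; apply: (@selfneg F _ two0).
    by rewrite -{1}bth (thK k) // (thP p) // bfNr.
  by rewrite -{1}bth (thK k) // (thP p) // bfNl.
have thg1 u : u \in g1 -> theta u \in g1.
  by move=> ug; apply: (subvP Hth1); apply: memv_img.
have decomp y : y \in g1 -> exists2 k, k \in (kspace theta :&: g1)%VS &
                  exists2 p, p \in (pspace theta :&: g1)%VS & y = k + p.
  move=> yg; exists ((2%:R)^-1 *: (y + theta y)).
    rewrite memv_cap; apply/andP; split; last by rewrite memvZ // memvD // thg1.
    rewrite memv_ker add_lfunE opp_lfunE id_lfunE linearZ linearD /= ththt.
    by rewrite [theta y + y]addrC subrr.
  exists ((2%:R)^-1 *: (y - theta y)).
    rewrite memv_cap; apply/andP; split; last by rewrite memvZ // memvD // ?memvN thg1.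
    rewrite memv_ker add_lfunE id_lfunE linearZ linearB /= ththt -scalerDr.
    by rewrite addrC addrA subrK subrr scaler0.
  by rewrite -scalerDr addrACA subrr addr0 -mulr2n -scaler_nat scalerA mulVf // scale1r.
have adlin : linear (br x) by move=> a u v; rewrite (proj2 brb).
have adE u : linfun (br x) u = br x u by rewrite linfunE'.
have Hadj u v : u \in g1 -> v \in g1 ->
    b (linfun (br x) u) v = - b u (linfun (br x) v).
  move=> ug vg; rewrite !adE (Hskew false true x u) //= /ssign /= expr0 scale1r.
  by rewrite bfNl // binv.
have nondP w : w \in (pspace theta :&: g1)%VS ->
    (forall z, z \in (pspace theta :&: g1)%VS -> b w z = 0) -> w = 0.
  move=> wP Hw; apply: bnd => y.
  move: wP; rewrite memv_cap => /andP [wp wg].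
  have /memv_addP [y0 y0g [y1 y1g ->]] : y \in (g0 + g1)%VS by rewrite Hfull memvf.
  rewrite bfDr // (proj2 (bg01 _ _ y0g wg)) add0r.
  have [k kK [p pP ->]] := decomp _ y1g.
  rewrite bfDr // (Hw p pP) addr0.
  by move: kK; rewrite memv_cap => /andP [kk _]; rewrite (proj2 (orth _ _ kk wp)).
have nondK w : w \in (kspace theta :&: g1)%VS ->
    (forall z, z \in (kspace theta :&: g1)%VS -> b w z = 0) -> w = 0.
  move=> wK Hw; apply: bnd => y.
  move: wK; rewrite memv_cap => /andP [wk wg].
  have /memv_addP [y0 y0g [y1 y1g ->]] : y \in (g0 + g1)%VS by rewrite Hfull memvf.
  rewrite bfDr // (proj2 (bg01 _ _ y0g wg)) add0r.
  have [k kK [p pP ->]] := decomp _ y1g.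
  rewrite bfDr // (Hw k kK) add0r.
  by move: pP; rewrite memv_cap => /andP [pp _]; rewrite (proj1 (orth _ _ wk pp)).
have brg1 y : y \in g1 -> br x y \in g1 by move=> yg; exact: (Hgr false true).
have imKP : (linfun (br x) @: (kspace theta :&: g1) <= pspace theta :&: g1)%VS.
  apply/subvP => w /memv_imgP [y]; rewrite memv_cap => /andP [yk yg] ->.
  rewrite adE memv_cap brg1 // andbT memv_ker add_lfunE id_lfunE Hhom thx thK //.
  by rewrite brNl // addNr.
have imPK : (linfun (br x) @: (pspace theta :&: g1) <= kspace theta :&: g1)%VS.
  apply/subvP => w /memv_imgP [y]; rewrite memv_cap => /andP [yp yg] ->.
  rewrite adE memv_cap brg1 // andbT memv_ker add_lfunE opp_lfunE id_lfunE Hhom thx thP //.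
  by rewrite (brNl brb x (- y)) (brNr brb y x) opprK subrr.
have le1 := @key_le _ _ (linfun (br x)) b _ _ bfb (fun y z yK zP => Hadj y z (memv_capP yK).2 (memv_capP zP).2) imKP nondP.
have le2 := @key_le _ _ (linfun (br x)) b _ _ bfb (fun y z yK zP => Hadj y z (memv_capP yK).2 (memv_capP zP).2) imPK nondK.
have eqd : \dim (linfun (br x) @: (kspace theta :&: g1)) =
           \dim (linfun (br x) @: (pspace theta :&: g1)) by apply/eqP; rewrite eqn_leq le1 le2.
rewrite /centralizer_in.
rewrite -(limg_ker_dim (linfun (br x)) (kspace theta :&: g1)).
rewrite -(limg_ker_dim (linfun (br x)) (pspace theta :&: g1)) eqd.
by rewrite !PoszD opprD addrACA subrr addr0.
Qed.
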